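(* Let $l$ and $m$ be positive integers and let $q(x)=x^6-(l+m+3)x^4+(lm+l+m+3)x^2-1$. Suppose $\pm\theta_1,\pm\theta_2,\pm\theta_3$ are the six roots of $q(x)$ in its splitting field over $\mathbb{Q}$. If $q(x)$ is reducible over $\mathbb{Q}$, then $1,\theta_1,\theta_2$ are linearly independent over $\mathbb{Q}$.
   Context: The roots of $q$ are simple, nonzero and real, and come in pairs $\pm\theta_j$; the labeling means the six roots are $\theta_1,-\theta_1,\theta_2,-\theta_2,\theta_3,-\theta_3$. *)

(* Defs.v *)
From HB Require Import structures.
From mathcomp Require Import all_boot all_order all_algebra algC.
Set Implicit Arguments. Unset Strict Implicit. Unset Printing Implicit Defensive.
Import Order.TTheory GRing.Theory Num.Theory.
Local Open Scope ring_scope.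

Definition q_lm (l m : nat) : {poly rat} :=
  'X^6 - ((l + m + 3)%N)%:R *: 'X^4
  + ((l * m + l + m + 3)%N)%:R *: 'X^2 - 1.

(* Main.v *)
Require Import Defs.
From HB Require Import structures.
From mathcomp Require Import all_boot all_order all_algebra algC.
From mathcomp Require Import ring lra zify.
Import Order.TTheory GRing.Theory Num.Theory.
Local Open Scope ring_scope.

Definition pp (l m : nat) : {poly rat} :=
  'X^3 - ((l + m + 3)%N)%:R *: 'X^2 + ((l * m + l + m + 3)%N)%:R *: 'X - 1.

Lemma comp_Xn (R : idomainType) n (r : {poly R}) : 'X^n \Po r = r ^+ n.
Proof.
elim: n => [|n IH]; first by rewrite !expr0 comp_polyC.
by rewrite exprS comp_polyM comp_polyX IH exprS.
Qed.

Lemma q_comp l m : q_lm l m = pp l m \Po 'X^2.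
Proof.
rewrite /q_lm /pp !(comp_polyB, comp_polyD, comp_polyZ, comp_polyX, comp_polyC).
by rewrite !comp_Xn -!exprM.
Qed.

Lemma pp_horner l m (x : rat) : (pp l m).[x] =
  x^+3 - ((l + m + 3)%N)%:R * x^+2 + ((l * m + l + m + 3)%N)%:R * x - 1.
Proof. by rewrite /pp !hornerE. Qed.

Lemma natzR (n : nat) : (n%:Z)%:~R = n%:R :> rat. Proof. reflexivity. Qed.
Lemma norat_int (A B : nat) (n : int) (d : nat) :
  coprime `|n| d.+1 ->
  n ^+ 3 - A%:Z * n ^+ 2 * d.+1%:Z + B%:Z * n * d.+1%:Z ^+ 2 - d.+1%:Z ^+ 3 = 0 ->
  d = 0%N /\ (n = 1 \/ n = -1).
Proof.
move=> cop.
set D := d.+1%:Z; set a := A%:Z; set b := B%:Z => H.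
have h1 : n ^+ 3 = D * (a * n ^+ 2 - b * n * D + D ^+ 2).
  apply/eqP; rewrite -subr_eq0 -[X in _ == X]H; apply/eqP; ring.
have h2 : D ^+ 3 = n * (n ^+ 2 - a * n * D + b * D ^+ 2).
  apply/eqP; rewrite -subr_eq0 -[X in _ == X]oppr0 -[X in _ == - X]H; apply/eqP; ring.
have /(congr1 absz) := h1; rewrite abszX abszM /= => h1'.
have /(congr1 absz) := h2; rewrite abszX abszM /= => h2'.
have dd : (d.+1 %| gcdn (`|n| ^ 3) d.+1)%N.
  by rewrite dvdn_gcd dvdnn andbT h1' dvdn_mulr.
have nd : (`|n| %| gcdn (d.+1 ^ 3) `|n|)%N.
  by rewrite dvdn_gcd dvdnn andbT h2' dvdn_mulr.
move: dd nd; rewrite (eqP (coprimeXl 3 cop)).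
rewrite coprime_sym in cop; rewrite (eqP (coprimeXl 3 cop)) !dvdn1 => /eqP dd /eqP nd.
split; first by case: dd.
case: n nd {h1 h2 h1' h2' H cop} => [k /= ->|[|k] /= // _]; [left|right]; done.
Qed.

Lemma norat l m : (0 < l)%N -> (0 < m)%N -> forall r : rat, (pp l m).[r] != 0.
Proof.
move=> hl hm r; case: (ratP r) => n d cop; apply/eqP => H.
rewrite pp_horner in H.
have Hz : n ^+ 3 - (l + m + 3)%N%:Z * n ^+ 2 * d.+1%:Z
   + (l * m + l + m + 3)%N%:Z * n * d.+1%:Z ^+ 2 - d.+1%:Z ^+ 3 = 0.
  apply: (@intr_inj rat); rewrite rmorph0 !(rmorphB, rmorphD, rmorphM, rmorphXn) /=.
  rewrite !natzR.
  have Dne0 : (d.+1%:Z)%:~R != 0 :> rat by rewrite intr_eq0.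
  rewrite -(mulr0 ((d.+1%:Z)%:~R ^+ 3)) -H; field.
  by rewrite addrC natr1 pnatr_eq0.
have [dE [nE|nE]] := norat_int _ _ _ _ cop Hz; move: Hz; rewrite dE nE /=; lia.
Qed.

Notation pC f := (map_poly (ratr : rat -> algC) f).

Lemma pp_size l m : size (pp l m) = 4%N.
Proof.
rewrite /pp -!addrA size_polyDl size_polyXn //.
apply: (leq_ltn_trans (size_polyD _ _)); rewrite gtn_max; apply/andP; split.
  by rewrite size_polyN (leq_ltn_trans (size_scale_leq _ _)) // size_polyXn.
apply: (leq_ltn_trans (size_polyD _ _)); rewrite gtn_max; apply/andP; split.
  by rewrite (leq_ltn_trans (size_scale_leq _ _)) // size_polyX.
by rewrite size_polyN size_poly1.
Qed.

Lemma pp_neq0 l m : pp l m != 0.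
Proof. by rewrite -size_poly_eq0 pp_size. Qed.

Lemma minpoly_y l m : (0 < l)%N -> (0 < m)%N -> forall y : algC,
  root (pC (pp l m)) y -> forall f : {poly rat}, root (pC f) y -> pp l m %| f.
Proof.
move=> hl hm y ry f rf.
have [h [Dh monh] hP] := minCpolyP y.
have hpp : h %| pp l m by rewrite -hP.
have hf : h %| f by rewrite -hP.
have h2 : (1 < size h)%N by have := size_minCpoly y; rewrite Dh size_map_poly.
have hle : (size h <= 4)%N by rewrite -(pp_size l m) dvdp_leq // pp_neq0.
suff h4 : size h = 4%N.
  have : h %= pp l m by rewrite -dvdp_size_eqp // h4 pp_size.
  by move/eqp_dvdl <-.
apply/eqP; rewrite eqn_leq hle /=; rewrite ltnNge; apply/negP => hlt.
have hs : (1 < size h < size (pp l m))%N by rewrite h2 pp_size.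
have [r hr] := @reducible_cubic_root _ (pp l m) h (eq_leq (pp_size l m)) hs hpp.
by move: hr; rewrite /root (negbTE (norat _ _ hl hm r)).
Qed.

Lemma minirr (x : algC) (g : {poly rat}) :
  g != 0 -> (forall f : {poly rat}, root (pC f) x = (g %| f)) ->
  forall f : {poly rat}, size f != 1%N -> f %| g -> f %= g.
Proof.
move=> g0 hP f sf fg.
have f0 : f != 0 by apply: contraNneq g0 => f0; move: fg; rewrite f0 dvd0p.
have := divpK fg => gE.
have : root (pC g) x by rewrite hP dvdpp.
rewrite -{1}gE rmorphM rootM => /orP [].
  rewrite hP => /dvdp_leq; rewrite size_divp // => H.
  have : (size g <= size g - (size f).-1)%N.
    apply: H; apply: contraNneq g0 => q0; by rewrite -gE q0 mul0r.
  have : (0 < size g)%N by rewrite size_poly_gt0.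
  have : (0 < size f)%N by rewrite size_poly_gt0.
  move: sf; case: (size f) => [|[|k]] //= _ _ sg0.
  by rewrite leqNgt ltn_subrL sg0.
by rewrite hP => gf; rewrite /eqp fg gf.
Qed.

Lemma cubic_horner (g : {poly rat}) : g \is monic -> size g = 4%N ->
  forall x, g.[x] = x ^+ 3 + g`_2 * x ^+ 2 + g`_1 * x + g`_0.
Proof.
move=> mg sg x; rewrite horner_coef sg !big_ord_recr big_ord0 /=.
have : g`_3 = 1 by move/monicP: mg; rewrite lead_coefE sg.
move=> ->; rewrite expr0 expr1; ring.
Qed.

Lemma six_mul (x : rat) : 6 * x = 0 -> x = 0.
Proof. by move/eqP; rewrite mulf_eq0 => /orP [//|/eqP]. Qed.

Lemma phi (g : {poly rat}) (t s : algC) (a b : rat) :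
  g \is monic -> size g = 4%N -> (forall f : {poly rat}, root (pC f) t = (g %| f)) ->
  (forall r : rat, ~~ root g r) -> b != 0 -> s = ratr a + ratr b * t ->
  root (pC g) s -> s = t.
Proof.
move=> mg sg hP nr b0 sE rs.
pose L : {poly rat} := b *: 'X + a%:P.
have sL : size L = 2%N.
  by rewrite /L size_polyDl size_scale // size_polyX // size_polyC; case: (a != 0).
have LE x : L.[x] = b * x + a by rewrite /L !hornerE.
pose G := g \Po L.
have gG : g %| G.
  rewrite -hP /root map_comp_poly horner_comp.
  rewrite /L rmorphD /= map_polyZ map_polyX map_polyC !hornerE /=.
  by rewrite addrC -sE.
have sG : size G = 4%N by rewrite size_comp_poly2.
have g0 : g != 0 by rewrite -size_poly_eq0 sg.
have sQ : size (G %/ g) = 1%N by rewrite size_divp // sG sg.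
have GE : G = (G %/ g)`_0 *: g.
  by rewrite -mul_polyC -(size1_polyC (eq_leq sQ)) divpK.
set c := (G %/ g)`_0 in GE.
have ev x : g.[b * x + a] = c * g.[x].
  by rewrite -LE -horner_comp -/G {1}GE hornerZ.
have E := cubic_horner _ mg sg.
pose D x := g.[b * x + a] - c * g.[x].
have D0 x : D x = 0 by rewrite /D ev subrr.
have cE : c = b ^+ 3.
  have key : 6 * (b ^+ 3 - c) = D 2 - 3 * D 1 + 3 * D 0 - D (-1).
    rewrite /D !E; ring.
  rewrite !D0 !mulr0 ?subr0 ?addr0 ?subr0 ?addr0 in key.
  by apply/eqP; rewrite eq_sym -subr_eq0; apply/eqP; apply: six_mul.
have [b1|b1] := eqVneq b 1.
  have key : 6 * a = D 1 + D (-1) - 2 * D 0.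
    rewrite /D !E cE b1; ring.
  rewrite !D0 !mulr0 ?subr0 ?addr0 ?subr0 ?addr0 in key.
  have a0 : a = 0 by apply: six_mul.
  by rewrite sE a0 b1 !rmorph0 rmorph1 add0r mul1r.
exfalso.
have b3 : b ^+ 3 != 1.
  apply: contra b1; rewrite -subr_eq0 => /eqP h.
  have : (b - 1) * (b ^+ 2 + b + 1) = 0 by rewrite -h; ring.
  move/eqP; rewrite mulf_eq0 => /orP [|]; first by rewrite subr_eq0.
  move=> /eqP h2; exfalso.
  have : 0 < b ^+ 2 + b + 1 by nra.
  by rewrite h2 ltxx.
pose r := a / (1 - b).
have rE : b * r + a = r.
  rewrite /r; field; by rewrite subr_eq0 eq_sym.
have := ev r; rewrite rE cE => h.
move: (nr r); rewrite /root.
suff -> : g.[r] = 0 by [].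
have : (1 - b ^+ 3) * g.[r] = 0 by rewrite mulrBl mul1r -{1}h subrr.
by move/eqP; rewrite mulf_eq0 subr_eq0 eq_sym (negbTE b3) => /eqP.
Qed.

Lemma hX2 (f : {poly rat}) (x : algC) : (pC (f \Po 'X^2)).[x] = (pC f).[x ^+ 2].
Proof. by rewrite map_comp_poly horner_comp map_polyXn hornerXn. Qed.

Lemma hNX (f : {poly rat}) (x : algC) : (pC (f \Po - 'X)).[x] = (pC f).[- x].
Proof. by rewrite map_comp_poly horner_comp rmorphN /= map_polyX hornerN hornerX. Qed.

Lemma X2NX : ('X^2 \Po - 'X : {poly rat}) = 'X^2.
Proof. by rewrite comp_Xn sqrrN. Qed.

Lemma NXNX : (- 'X \Po - 'X : {poly rat}) = 'X.
Proof. by rewrite -scaleN1r comp_polyZ comp_polyX scalerA mulN1r opprK scale1r. Qed.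

Lemma q_size l m : size (q_lm l m) = 7%N.
Proof.
have := size_comp_poly (pp l m) 'X^2.
rewrite -q_comp pp_size size_polyXn /=.
have : q_lm l m != 0.
  by rewrite q_comp -size_poly_eq0; apply/negP => /eqP h; move: (size_comp_poly (pp l m) 'X^2); rewrite h pp_size size_polyXn.
rewrite -size_poly_eq0; case: (size (q_lm l m)) => //= n _ ->. done.
Qed.

Lemma q_even l m : q_lm l m \Po - 'X = q_lm l m.
Proof. by rewrite q_comp -comp_polyA X2NX. Qed.

Lemma q_eval l m (x : algC) : (pC (q_lm l m)).[x] = (pC (pp l m)).[x ^+ 2].
Proof. by rewrite q_comp hX2. Qed.

Lemma nat_aux1 (x y : nat) : (3 < y)%N -> (x + x - 1 - 1)%N = ((y - 1) * 2)%N -> (4 <= x)%N.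
Proof. lia. Qed.

Lemma nat_aux2 (x : nat) : (4 <= x)%N -> ((x + x).-1 <= 7)%N -> x = 4%N.
Proof. lia. Qed.

Lemma nat_aux3 (x : nat) : (4 <= x)%N -> (x - x.-1)%N = 1%N.
Proof. lia. Qed.

Lemma core l m : (0 < l)%N -> (0 < m)%N -> forall (t1 t2 : algC) (a b : rat),
  root (pC (q_lm l m)) t1 -> root (pC (q_lm l m)) t2 ->
  ~ irreducible_poly (q_lm l m) ->
  b != 0 -> t2 = ratr a + ratr b * t1 -> t2 = t1 \/ t2 = - t1.
Proof.
move=> hl hm t1 t2 a b r1 r2 hred b0 tE.
set q := q_lm l m in r1 r2 hred.
have [g [_ mg] hP] := minCpolyP t1.
have g0 : g != 0 by apply: monic_neq0.
have gq : g %| q by rewrite -hP.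
have nrg : forall r : rat, ~~ root g r.
  move=> r; apply/negP => /(root_dvdp gq).
  by rewrite /q q_comp /root horner_comp hornerXn (negbTE (norat _ _ hl hm _)).
pose gm := g \Po (- 'X).
set Ev := even_poly g \Po 'X^2; set Od := odd_poly g \Po 'X^2.
have EO : Ev + Od * 'X = g by apply: poly_even_odd.
have gmE : gm = Ev - Od * 'X.
  rewrite /gm -{1}EO comp_polyD comp_polyM comp_polyX /Ev /Od -!comp_polyA X2NX.
  by rewrite mulrN.
pose H := even_poly g ^+ 2 - 'X * odd_poly g ^+ 2.
have HE : H \Po 'X^2 = g * gm.
  rewrite /H comp_polyB !comp_polyM comp_polyX -/Ev -/Od gmE -{1}EO.
  rewrite !expr2; ring.
have sgm : size gm = size g by rewrite size_comp_poly2 // size_polyN size_polyX.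
have gm0 : gm != 0 by rewrite -size_poly_eq0 sgm size_poly_eq0.
have ry1 : root (pC (pp l m)) (t1 ^+ 2) by rewrite /root -q_eval.
have rH : root (pC H) (t1 ^+ 2).
  rewrite /root -hX2 HE rmorphM hornerM.
  have rg : root (pC g) t1 by rewrite hP dvdpp.
  by rewrite (eqP rg) mul0r.
have pH : pp l m %| H := minpoly_y l m hl hm _ ry1 H rH.
have H0 : H != 0.
  by apply: contraNneq (mulf_neq0 g0 gm0) => H0; rewrite -HE H0 comp_poly0.
have sH4 : (4 <= size H)%N by rewrite -(pp_size l m) dvdp_leq.
have sgg : size (g * gm) = (size g + size g).-1 by rewrite size_mul // sgm.
have sHc := size_comp_poly H 'X^2; rewrite HE size_polyXn sgg /= in sHc.
rewrite -!subn1 in sHc.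
have sg4 : (4 <= size g)%N.
  by move: sH4 sHc; set x := size g; set y := size H; apply: nat_aux1.
have sq := q_size l m.
have q0 : q != 0 by rewrite -size_poly_eq0 sq.
case: (boolP (coprimep g gm)) => cop.
  have gmq : gm %| q by rewrite /q -(q_even l m); apply: dvdp_comp_poly.
  have ggq : g * gm %| q by rewrite Gauss_dvdp // gq gmq.
  have := dvdp_leq q0 ggq; rewrite sgg sq => sle.
  have sg : size g = 4%N by move: sle; apply: nat_aux2.
  have eq : g * gm %= q by rewrite -dvdp_size_eqp // sgg sq sg.
  have : root (pC (g * gm)) t2.
    by rewrite (eqp_root (_ : pC (g * gm) %= pC q)) // eqp_map.
  rewrite rmorphM rootM => /orP [rg2|rgm2].
    by left; apply: (phi g t1 t2 a b mg sg hP nrg b0 tE rg2).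
  right.
  have h : - t2 = t1.
    apply: (phi g t1 (- t2) (- a) (- b) mg sg hP nrg); rewrite ?oppr_eq0 //.
      by rewrite tE !rmorphN; ring.
    by rewrite /root -hNX.
  by rewrite -h opprK.
exfalso.
have sd : size (gcdp g gm) != 1%N by rewrite -coprimep_def.
have dg := minirr t1 g g0 hP _ sd (dvdp_gcdl g gm).
have ggm : g %| gm by rewrite -(eqp_dvdl _ dg) dvdp_gcdr.
have sQ : size (gm %/ g) = 1%N by rewrite size_divp // sgm nat_aux3.
have gmE2 : gm = (gm %/ g)`_0 *: g.
  by rewrite -mul_polyC -(size1_polyC (eq_leq sQ)) divpK.
set c := (gm %/ g)`_0 in gmE2.
have gmm : gm \Po - 'X = g by rewrite /gm -comp_polyA NXNX comp_polyXr.
have cc : c * c = 1.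
  have h : g = (c * c) *: g.
    by rewrite -{1}gmm gmE2 comp_polyZ -/gm gmE2 scalerA.
  apply/eqP; have : (c * c - 1) *: g == 0 by rewrite scalerBl -h scale1r subrr.
  by rewrite scale_poly_eq0 (negbTE g0) orbF subr_eq0.
have : c ^+ 2 == 1 by rewrite expr2 cc.
rewrite sqrf_eq1 => /orP [/eqP c1|/eqP cm1].
  have e : Ev - Od * 'X = Ev + Od * 'X by rewrite -gmE EO gmE2 c1 scale1r.
  have h2 : (2%:R : rat) *: (Od * 'X) = 0.
    rewrite scaler_nat mulr2n.
    have -> : Od * 'X + Od * 'X = (Ev + Od * 'X) - (Ev - Od * 'X) by ring.
    by rewrite e subrr.
  have OX0 : Od * 'X = 0.
    by apply/eqP; move/eqP: h2; rewrite scale_poly_eq0 pnatr_eq0.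
  have g_even : g = Ev by rewrite -EO OX0 addr0.
  have rg : root (pC g) t1 by rewrite hP dvdpp.
  have rE : root (pC (even_poly g)) (t1 ^+ 2) by rewrite /root -hX2 -/Ev -g_even.
  have pE : pp l m %| even_poly g := minpoly_y l m hl hm _ ry1 _ rE.
  have qg : q %| g by rewrite /q q_comp g_even; apply: dvdp_comp_poly.
  apply: hred; split; first by rewrite sq.
  move=> f sf fq.
  have fg : f %| g by apply: dvdp_trans fq qg.
  apply: eqp_trans (minirr t1 g g0 hP f sf fg) _.
  by rewrite /eqp gq qg.
have e0 : gm.[0] = g.[0] by rewrite /gm horner_comp hornerN hornerX oppr0.
move: e0; rewrite gmE2 cm1 hornerZ mulN1r => e0.
have : g.[0] *+ 2 = 0 by rewrite mulr2n -{1}e0 addNr.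
move/eqP; rewrite mulrn_eq0 /= => g00.
by move: (nrg 0); rewrite /root g00.
Qed.

Lemma nat_aux4 (l m : nat) : (0 < l)%N -> (6 * (l * m + l + m + 3) < 2 * (l + m + 3) ^ 2)%N.
Proof. move=> hl; have : (l * m <= l * l + m * m)%N by nia. nia. Qed.

Lemma qr l m (r : rat) : (q_lm l m).[r] =
  r ^+ 6 - ((l + m + 3)%N)%:R * r ^+ 4 + ((l * m + l + m + 3)%N)%:R * r ^+ 2 - 1.
Proof. by rewrite q_comp horner_comp hornerXn pp_horner -!exprM. Qed.

Lemma norat_C l m : (0 < l)%N -> (0 < m)%N -> forall r : rat,
  ~~ root (pC (q_lm l m)) (ratr r).
Proof.
move=> hl hm r; rewrite fmorph_root /root q_comp horner_comp hornerXn.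
exact: norat.
Qed.

Lemma final_contra l m : (0 < l)%N -> (0 < m)%N -> forall t1 t2 t3 : algC,
  (forall x : algC, (pC (q_lm l m)).[x] =
     (x - t1) * (x + t1) * (x - t2) * (x + t2) * (x - t3) * (x + t3)) ->
  t2 ^+ 2 = t1 ^+ 2 -> False.
Proof.
move=> hl hm t1 t2 t3 qv y12.
set E1 : rat := ((l + m + 3)%N)%:R.
set E2 : rat := ((l * m + l + m + 3)%N)%:R.
have ev (r : rat) : ratr (r ^+ 6 - E1 * r ^+ 4 + E2 * r ^+ 2 - 1) =
    (ratr r - t1) * (ratr r + t1) * (ratr r - t2) * (ratr r + t2) * (ratr r - t3) * (ratr r + t3).
  by rewrite -qr -horner_map qv.
set e1 := ratr E1 : algC; set e2 := ratr E2 : algC.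
pose F (x : algC) := x ^+ 6 - e1 * x ^+ 4 + e2 * x ^+ 2 - 1 - (x ^+ 2 - t1 ^+ 2) ^+ 2 * (x ^+ 2 - t3 ^+ 2).
have Fr (r : rat) : F (ratr r) = 0.
  have := ev r; rewrite !(rmorphB, rmorphD, rmorphM, rmorphXn, rmorph1) -/e1 -/e2 => e.
  rewrite /F e.
  have -> : (ratr r - t1) * (ratr r + t1) * (ratr r - t2) * (ratr r + t2) * (ratr r - t3) * (ratr r + t3)
    = (ratr r ^+ 2 - t1 ^+ 2) * (ratr r ^+ 2 - t2 ^+ 2) * (ratr r ^+ 2 - t3 ^+ 2) by ring.
  rewrite y12; ring.
have F0 : F 0 = 0 by have := Fr 0; rewrite rmorph0.
have F1 : F 1 = 0 by have := Fr 1; rewrite rmorph1.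
have F2 : F 2 = 0 by have := Fr 2; rewrite rmorph_nat.
have V3 : (t1 ^+ 2) ^+ 2 * t3 ^+ 2 = 1.
  by apply/eqP; rewrite -subr_eq0; apply/eqP; rewrite -[RHS]F0 /F; ring.
have V1 : e1 = 2 * t1 ^+ 2 + t3 ^+ 2.
  apply/eqP; rewrite -subr_eq0; apply/eqP.
  have h12 : (12 : algC) != 0 by rewrite pnatr_eq0.
  apply: (mulfI h12); rewrite mulr0.
  transitivity (- (F 2 - 4 * F 1 + 3 * F 0)).
    rewrite /F /=; ring.
  by rewrite F0 F1 F2; ring.
have V2 : e2 = (t1 ^+ 2) ^+ 2 + 2 * t1 ^+ 2 * t3 ^+ 2.
  apply/eqP; rewrite -subr_eq0; apply/eqP.
  have h12 : (12 : algC) != 0 by rewrite pnatr_eq0.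
  apply: (mulfI h12); rewrite mulr0.
  transitivity (16 * F 1 - 15 * F 0 - F 2).
    rewrite /F /=; ring.
  by rewrite F0 F1 F2; ring.
have key : (2 * e1 ^+ 2 - 6 * e2) * t1 ^+ 2 = e1 * e2 - 9.
  have -> : (9 : algC) = 9 * ((t1 ^+ 2) ^+ 2 * t3 ^+ 2) by rewrite V3 mulr1.
  rewrite V1 V2; ring.
have Ene : 2 * E1 ^+ 2 - 6 * E2 != 0.
  rewrite subr_eq0 /E1 /E2 -!natrX -!natrM eqr_nat.
  by rewrite neq_ltn (nat_aux4 _ _ hl) orbT.
have yr : t1 ^+ 2 = ratr ((E1 * E2 - 9) / (2 * E1 ^+ 2 - 6 * E2)).
  have dne : ratr (2 * E1 ^+ 2 - 6 * E2) != 0 :> algC by rewrite fmorph_eq0.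
  rewrite fmorph_div; apply: (canRL (mulfK dne)).
  move: dne; rewrite !(rmorphB, rmorphM, rmorphXn) -/e1 -/e2 !rmorph_nat => dne.
  move: key; rewrite /e1 /e2 /E1 /E2 !rmorph_nat => key.
  by rewrite -key; ring.
have rt1 : (pC (pp l m)).[t1 ^+ 2] = 0 by rewrite -q_eval qv subrr !(mul0r, mulr0).
move: rt1; rewrite yr horner_map => /eqP; rewrite fmorph_eq0.
by rewrite (negbTE (norat _ _ hl hm _)).
Qed.

Lemma lin_rat (a b : rat) (t : algC) : b != 0 -> ratr a + ratr b * t = 0 -> t = ratr (- a / b).
Proof.
move=> b0 h.
have bne : ratr b != 0 :> algC by rewrite fmorph_eq0.
have h' : ratr b * t = - ratr a by apply/eqP; rewrite -subr_eq0 opprK addrC h.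
by rewrite fmorph_div rmorphN -h' mulrC mulKf.
Qed.

Theorem lemma2p1 (l m : nat) (hl : (0 < l)%N) (hm : (0 < m)%N)
  (t1 t2 t3 : algC)
  (hroots : map_poly (ratr : rat -> algC) (q_lm l m) =
     \prod_(r <- [:: t1; - t1; t2; - t2; t3; - t3]) ('X - r%:P))
  (hred : ~ irreducible_poly (q_lm l m)) :
  forall a b c : rat, ratr a + ratr b * t1 + ratr c * t2 = 0 ->
    [/\ a = 0, b = 0 & c = 0].
Proof.
move=> a b c h.
have qv x : (pC (q_lm l m)).[x] =
    (x - t1) * (x + t1) * (x - t2) * (x + t2) * (x - t3) * (x + t3).
  rewrite hroots horner_prod unlock /= !hornerXsubC; ring.
have r1 : root (pC (q_lm l m)) t1 by rewrite /root qv subrr !(mul0r, mulr0).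
have r2 : root (pC (q_lm l m)) t2 by rewrite /root qv subrr !(mul0r, mulr0).
have nr := norat_C l m hl hm.
have y12 : t2 = t1 \/ t2 = - t1 -> False.
  by move=> e; apply: (final_contra l m hl hm t1 t2 t3 qv); case: e => ->; rewrite ?sqrrN.
case: (eqVneq c 0) => [c0|c0].
  rewrite c0 rmorph0 mul0r addr0 in h.
  case: (eqVneq b 0) => [b0|b0].
    rewrite b0 rmorph0 mul0r addr0 in h; split=> //.
    by move/eqP: h; rewrite fmorph_eq0 => /eqP.
  by move: r1; rewrite (lin_rat _ _ _ b0 h) (negbTE (nr _)).
exfalso.
case: (eqVneq b 0) => [b0|b0].
  rewrite b0 rmorph0 mul0r addr0 in h.
  by move: r2; rewrite (lin_rat _ _ _ c0 h) (negbTE (nr _)).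
have cne : ratr c != 0 :> algC by rewrite fmorph_eq0.
have e1 : ratr c * t2 = - (ratr a + ratr b * t1).
  by apply/eqP; rewrite -subr_eq0 opprK addrC h.
have tE : t2 = ratr (- a / c) + ratr (- b / c) * t1.
  rewrite !fmorph_div !rmorphN; apply: (mulfI cne); rewrite e1; field.
  exact: cne.
apply: y12; apply: (core l m hl hm t1 t2 (- a / c) (- b / c) r1 r2 hred _ tE).
by rewrite mulf_neq0 ?oppr_eq0 ?invr_eq0.
Qed.
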